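(* There exist absolute constants $0<c\le C$ such that the following holds. Let $d\ge 1$, $n\ge3$, $m\ge1$ be integers and $0<r\le 1/(2d)$, let $\mathcal{L}$ be the FTCS operator with parameter $r$, and let $A$ be the $mn^d\times mn^d$ block matrix consisting of $m\times m$ blocks of size $n^d\times n^d$, with identity blocks $I$ on the block diagonal, blocks $-\mathcal{L}$ on the block sub-diagonal, and zero blocks elsewhere. Then $c\le\|A\|\le C$ and $c\,m\le\|A^{-1}\|\le C\,m$. In particular the condition number $\|A\|\|A^{-1}\|$ of $A$ is $\Theta(m)$.
   Context: The FTCS operator with parameter $r$ on $\mathbb{R}^{\mathbb{Z}_n^d}$ is $\mathcal{L}=I_n^{\otimes d}+r\sum_{j=1}^d I_n^{\otimes(j-1)}\otimes H\otimes I_n^{\otimes(d-j)}$, where $H$ is the $n\times n$ circulant matrix with $-2$ on the diagonal, $1$ on the super- and sub-diagonal, and $1$ in the corner entries $(1,n)$ and $(n,1)$; equivalently $(\mathcal{L}v)(\mathbf{k})=(1-2dr)v(\mathbf{k})+r\sum_{i=1}^d(v(\mathbf{k}+\mathbf{e}_i)+v(\mathbf{k}-\mathbf{e}_i))$ with indices mod $n$. $\|\cdot\|$ denotes the operator (spectral) norm. *)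

(* Defs.v *)
From HB Require Import structures.
From mathcomp Require Import all_boot all_order all_algebra.
From mathcomp Require Import boolp classical_sets reals.
Set Implicit Arguments. Unset Strict Implicit. Unset Printing Implicit Defensive.
Import Order.TTheory GRing.Theory Num.Theory.
Local Open Scope ring_scope.

Section FTCS.
Variable R : realType.

(* The grid Z_n^d, as functions 'I_d -> 'I_n (cyclic indices). *)
Definition grid (d n : nat) := {ffun 'I_d -> 'I_n}.

Definition shiftP d n (k : grid d n) (i : 'I_d) : grid d n :=
  [ffun j => if j == i then ordS (k j) else k j].
Definition shiftM d n (k : grid d n) (i : 'I_d) : grid d n :=
  [ffun j => if j == i then ord_pred (k j) else k j].

(* Entry (k,l) of the FTCS operator L:
   (L v)(k) = (1-2dr) v(k) + r sum_i (v(k+e_i) + v(k-e_i)). *)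
Definition ftcs_entry d n (r : R) (k l : grid d n) : R :=
  (1 - 2 * d%:R * r) * (k == l)%:R
  + r * \sum_(i < d) ((l == shiftP k i)%:R + (l == shiftM k i)%:R).

Definition bidx d n m := ('I_m * grid d n)%type.

Definition bsize d n m := #|{: bidx d n m}|.

(* Rows/columns are
   enumerated via enum_val (a permutation of coordinates, which does not
   affect operator norms). *)
Definition bval d n m (p : 'I_(bsize d n m)) : bidx d n m :=
  @enum_val (bidx d n m) (mem predT) p.

Definition ftcs_block d n m (r : R) : 'M[R]_(bsize d n m) :=
  \matrix_(p, q)
    let: (i, k) := bval p in
    let: (j, l) := bval q in
    ((i == j) && (k == l))%:R - (nat_of_ord i == (nat_of_ord j).+1)%:R * ftcs_entry r k l.

Definition vnorm N (x : 'cV[R]_N) : R := Num.sqrt (\sum_i x i 0 ^+ 2).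

Definition opnorm N M (A : 'M[R]_(N, M)) : R :=
  sup [set vnorm (A *m x) | x in [set x : 'cV[R]_M | vnorm x = 1]]%classic.

End FTCS.

(* Main.v *)
Require Import Defs.
From HB Require Import structures.
From mathcomp Require Import all_boot all_order all_algebra.
From mathcomp Require Import boolp classical_sets reals Rstruct.
From mathcomp Require Import ring lra.
Import Order.TTheory GRing.Theory Num.Theory.
Local Open Scope ring_scope.

Section Gen.
Variable R : realType.

Lemma sum_eq1 (T : finType) (s : T) : \sum_(l : T) (l == s)%:R = 1 :> R.
Proof.
rewrite (bigD1 s) //= eqxx big1 ?addr0 // => l /negbTE -> //.
Qed.

Lemma sub_sum_le (I : finType) (P : pred I) (F : I -> R) :
  (forall i, 0 <= F i) -> \sum_(i | P i) F i <= \sum_i F i.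
Proof.
move=> F0; rewrite [X in _ <= X](bigID P) /= lerDl sumr_ge0 //.
Qed.

Lemma jensen (I : finType) (w v : I -> R) :
  (forall i, 0 <= w i) -> \sum_i w i <= 1 ->
  (\sum_i w i * v i) ^+ 2 <= \sum_i w i * v i ^+ 2.
Proof.
move=> w0 w1; set a := \sum_i w i * v i; set s := \sum_i w i.
have h0 : 0 <= \sum_i w i * (v i - a) ^+ 2.
  by apply: sumr_ge0 => i _; rewrite mulr_ge0 ?sqr_ge0.
have E : \sum_i w i * (v i - a) ^+ 2
   = \sum_i w i * v i ^+ 2 - 2 * a * a + a ^+ 2 * s.
  transitivity (\sum_i (w i * v i ^+ 2 - (2 * a) * (w i * v i) + a ^+ 2 * w i)).
    by apply: eq_bigr => i _; ring.
  by rewrite big_split /= sumrB -!mulr_sumr.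
have hs : a ^+ 2 * s <= a ^+ 2 by rewrite ler_piMr ?sqr_ge0.
move: h0; rewrite E -mulrA -expr2 => h0; lra.
Qed.

End Gen.

Section Gen2.
Variable R : realType.
Variable k : nat.

Definition SSg (x : 'cV[R]_k) := \sum_i x i 0 ^+ 2.

Lemma SSg_ge0 x : 0 <= SSg x.
Proof. by apply: sumr_ge0 => i _; rewrite sqr_ge0. Qed.

Lemma SSg_scale a x : SSg (a *: x) = a ^+ 2 * SSg x.
Proof. by rewrite /SSg mulr_sumr; apply: eq_bigr => i _; rewrite mxE exprMn. Qed.

Lemma vnormE x : vnorm x = Num.sqrt (SSg x).
Proof. by []. Qed.

Lemma unit_SS x0 : 0 < SSg x0 ->
  SSg ((Num.sqrt (SSg x0))^-1 *: x0) = 1.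
Proof.
move=> h; rewrite SSg_scale exprVn sqr_sqrtr ?ltW // mulVf //.
by rewrite gt_eqF.
Qed.

Lemma opnorm_ub (B : 'M[R]_k) K : 0 <= K ->
  (forall x, SSg (B *m x) <= K ^+ 2 * SSg x) ->
  ubound [set vnorm (B *m x) | x in [set x : 'cV[R]_k | vnorm x = 1]]%classic K.
Proof.
move=> K0 hB _ [x /= hx <-].
have S1 : SSg x = 1.
  by rewrite -(sqr_sqrtr (SSg_ge0 x)) -vnormE hx expr1n.
rewrite vnormE -(ger0_norm K0) -sqrtr_sqr ler_sqrt ?sqr_ge0 //.
by have := hB x; rewrite S1 mulr1.
Qed.

Lemma opnorm_le (B : 'M[R]_k) K x0 : 0 <= K -> 0 < SSg x0 ->
  (forall x, SSg (B *m x) <= K ^+ 2 * SSg x) -> opnorm B <= K.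
Proof.
move=> K0 hx0 hB; apply: ge_sup; last exact: opnorm_ub.
set u := (Num.sqrt (SSg x0))^-1 *: x0.
exists (vnorm (B *m u)); exists u => //=.
by rewrite vnormE unit_SS // sqrtr1.
Qed.

Lemma opnorm_ge (B : 'M[R]_k) K c x0 : 0 <= K -> 0 < SSg x0 -> 0 <= c ->
  (forall x, SSg (B *m x) <= K ^+ 2 * SSg x) ->
  c ^+ 2 * SSg x0 <= SSg (B *m x0) -> c <= opnorm B.
Proof.
move=> K0 hx0 c0 hB hc.
have ub : has_ubound [set vnorm (B *m x) | x in [set x : 'cV[R]_k | vnorm x = 1]]%classic.
  by exists K; apply: opnorm_ub.
set a := (Num.sqrt (SSg x0))^-1.
set u := a *: x0.
have hu : [set vnorm (B *m x) | x in [set x : 'cV[R]_k | vnorm x = 1]]%classic (vnorm (B *m u)).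
  by exists u => //=; rewrite vnormE unit_SS // sqrtr1.
apply: le_trans (ub_le_sup ub hu).
have a2 : a ^+ 2 * SSg x0 = 1 by rewrite -SSg_scale unit_SS.
rewrite vnormE -scalemxAr SSg_scale -(ger0_norm c0) -sqrtr_sqr ler_sqrt.
  have a0 : 0 <= a ^+ 2 by rewrite sqr_ge0.
  have := ler_wpM2l a0 hc.
  by rewrite mulrCA a2 mulr1.
by rewrite mulr_ge0 ?sqr_ge0 ?SSg_ge0.
Qed.

End Gen2.
Arguments SSg {R k}.
Arguments SSg_ge0 {R k}.
Arguments opnorm_le {R k}.
Arguments opnorm_ge {R k}.
Section Ftcs.
Variable R : realType.
Variables (d n m' : nat) (r : R).
Hypotheses (hd : (1 <= d)%N) (hn : (0 < n)%N) (hr0 : 0 < r) (hr1 : r <= 1 / (2 * d%:R)).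
Local Notation m := m'.+1.
Local Notation G := (grid d n).
Local Notation T := (bidx d n m).
Local Notation N := (bsize d n m).
Local Notation L := (@ftcs_entry R d n r).

Lemma a_ge0 : 0 <= 1 - 2 * d%:R * r.
Proof.
have d0 : 0 < d%:R :> R by rewrite ltr0n.
move: hr1; rewrite ler_pdivlMr ?mulr_gt0 // => h.
rewrite subr_ge0 mulrC; exact: h.
Qed.

Lemma L_ge0 k l : 0 <= L k l.
Proof.
rewrite /ftcs_entry addr_ge0 // mulr_ge0 ?a_ge0 ?ler0n ?(ltW hr0) //.
by apply: sumr_ge0 => i _; rewrite addr_ge0.
Qed.

Lemma shiftMP (k : G) i : shiftM (shiftP k i) i = k.
Proof.
by apply/ffunP => j; rewrite !ffunE; case: eqP => // ->; rewrite ?ffunE ?eqxx ?ordSK.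
Qed.

Lemma shiftPM (k : G) i : shiftP (shiftM k i) i = k.
Proof.
by apply/ffunP => j; rewrite !ffunE; case: eqP => // ->; rewrite ?ffunE ?eqxx ?ord_predK.
Qed.

Lemma eqPM (k l : G) i : (l == shiftP k i) = (k == shiftM l i).
Proof.
apply/eqP/eqP => [->|->]; by rewrite ?shiftMP ?shiftPM.
Qed.

Lemma eqMP (k l : G) i : (l == shiftM k i) = (k == shiftP l i).
Proof.
apply/eqP/eqP => [->|->]; by rewrite ?shiftMP ?shiftPM.
Qed.

Lemma L_row k : \sum_l L k l = 1.
Proof.
rewrite /ftcs_entry big_split /= -mulr_sumr -mulr_sumr.
rewrite (eq_bigr (fun l => (l == k)%:R)); last by move=> l _; rewrite eq_sym.
rewrite sum_eq1 mulr1 exchange_big /=.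
rewrite (eq_bigr (fun i => 2)); last first.
  by move=> i _; rewrite big_split /= !sum_eq1.
rewrite sumr_const card_ord; rewrite -[2 *+ d]mulr_natr. 
have -> : (2 * d%:R * r) = r * (2 * d%:R) by rewrite mulrC.
rewrite [2 * d%:R]mulrC; lra.
Qed.

Lemma L_col l : \sum_k L k l = 1.
Proof.
rewrite /ftcs_entry big_split /= -mulr_sumr -mulr_sumr.
rewrite sum_eq1 mulr1 exchange_big /=.
rewrite (eq_bigr (fun i => 2)); last first.
  move=> i _; rewrite big_split /=.
  rewrite (eq_bigr (fun k => (k == shiftM l i)%:R)); last first.
    by move=> k _; rewrite eqPM.
  rewrite [X in _ + X](eq_bigr (fun k => (k == shiftP l i)%:R)); last first.
    by move=> k _; rewrite eqMP.
  by rewrite !sum_eq1.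
rewrite sumr_const card_ord; rewrite -[2 *+ d]mulr_natr.
have -> : (2 * d%:R * r) = r * (2 * d%:R) by rewrite mulrC.
rewrite [2 * d%:R]mulrC; lra.
Qed.

Definition Lap (v : G -> R) k := \sum_l L k l * v l.

Lemma Lap_contr v : \sum_k (Lap v k) ^+ 2 <= \sum_k v k ^+ 2.
Proof.
apply: (@le_trans _ _ (\sum_k \sum_l L k l * v l ^+ 2)).
  apply: ler_sum => k _; apply: jensen => [l|]; first exact: L_ge0.
  by rewrite L_row.
rewrite exchange_big /=; apply: ler_sum => l _.
by rewrite -mulr_suml L_col mul1r.
Qed.

Lemma Lap_const c k : Lap (fun _ => c) k = c.
Proof. by rewrite /Lap -mulr_suml L_row mul1r. Qed.


Definition ent (s t : T) : R :=
  let: (i, k) := s in let: (j, l) := t in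
  ((i == j) && (k == l))%:R - (nat_of_ord i == (nat_of_ord j).+1)%:R * L k l.

Definition fv (x : 'cV[R]_N) (t : T) : R := x (enum_rank t) 0.

Lemma fvE (x : 'cV[R]_N) (p : 'I_N) : x p 0 = fv x (bval p).
Proof. by rewrite /fv /bval enum_valK. Qed.

Lemma sumT (F : T -> R) : \sum_(p : 'I_N) F (bval p) = \sum_t F t.
Proof. by rewrite /bval -big_enum_val. Qed.

Definition Aop (X : T -> R) s := \sum_t ent s t * X t.

Lemma mulE (x : 'cV[R]_N) t : fv (ftcs_block d n m r *m x) t = Aop (fv x) t.
Proof.
rewrite /fv mxE /Aop -sumT; apply: eq_bigr => q _.
by rewrite mxE /bval enum_rankK enum_valK.
Qed.

Definition vec (F : T -> R) : 'cV[R]_N := \col_p F (bval p).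

Lemma fv_vec F t : fv (vec F) t = F t.
Proof. by rewrite /fv mxE /bval enum_rankK. Qed.

Lemma fv_inj (x y : 'cV[R]_N) : (forall t, fv x t = fv y t) -> x = y.
Proof. by move=> h; apply/matrixP => p j; rewrite (ord1 j) !fvE h. Qed.

Definition SS (X : T -> R) := \sum_t X t ^+ 2.
Definition SSv (x : 'cV[R]_N) := \sum_p x p 0 ^+ 2.

Lemma SSvE (x : 'cV[R]_N) : SSv x = SS (fv x).
Proof. by rewrite /SSv /SS -sumT; apply: eq_bigr => p _; rewrite fvE. Qed.

Definition SB (X : T -> R) (i : 'I_m) := \sum_k X (i, k) ^+ 2.

Lemma SS_blocks X : SS X = \sum_i SB X i.
Proof. by rewrite /SS /SB pair_bigA; apply: eq_bigr => -[]. Qed.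

Definition NB (X : T -> R) (i : 'I_m) k :=
  if nat_of_ord i is i'.+1 then Lap (fun l => X (inord i', l)) k else 0.

Lemma sum_sub (i : 'I_m) (g : 'I_m -> R) :
  \sum_(j : 'I_m) (nat_of_ord i == (nat_of_ord j).+1)%:R * g j =
  if nat_of_ord i is i'.+1 then g (inord i') else 0.
Proof.
case: i => [[|i'] Hi] /=.
  by rewrite big1 // => j _; rewrite mul0r.
have Hi' : (i' < m)%N by apply: ltnW.
rewrite (bigD1 (inord i')) //= inordK // eqxx mul1r big1 ?addr0 // => j Hj.
rewrite eqSS; case: eqP; rewrite ?mul0r // => E.
by move: Hj; rewrite E inord_val eqxx.
Qed.

Lemma AopE X i k : Aop X (i, k) = X (i, k) - NB X i k.
Proof.
rewrite /Aop (eq_bigr (fun t => (t == (i, k))%:R * X t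
   - (nat_of_ord i == (nat_of_ord t.1).+1)%:R * (L k t.2 * X t))); last first.
  move=> [j l] _ /=; rewrite mulrBl mulrA; congr (_ - _).
  by rewrite xpair_eqE [j == i]eq_sym [l == k]eq_sym.
rewrite sumrB (bigD1 (i, k)) //= eqxx mul1r big1 ?addr0; last first.
  by move=> t /negbTE ->; rewrite mul0r.
congr (_ - _).
transitivity (\sum_(j : 'I_m) \sum_(l : G) (nat_of_ord i == (nat_of_ord j).+1)%:R * (L k l * X (j, l))).
  by rewrite pair_bigA; apply: eq_bigr => -[].
rewrite (eq_bigr (fun j => (nat_of_ord i == (nat_of_ord j).+1)%:R * Lap (fun l => X (j, l)) k)); last first.
  by move=> j _; rewrite /Lap mulr_sumr.
by rewrite sum_sub /NB.
Qed.


Lemma SB_ge0 X i : 0 <= SB X i.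
Proof. by apply: sumr_ge0 => k _; rewrite sqr_ge0. Qed.

Lemma SS_ge0 X : 0 <= SS X.
Proof. by apply: sumr_ge0 => k _; rewrite sqr_ge0. Qed.

Lemma NB_sum Y : \sum_i \sum_k (NB Y i k) ^+ 2 <= \sum_i SB Y i.
Proof.
apply: (@le_trans _ _ (\sum_(i : 'I_m) (if nat_of_ord i is i'.+1 then SB Y (inord i') else 0))).
  apply: ler_sum => i _; rewrite /NB; case: (nat_of_ord i) => [|i'].
    by rewrite big1 // => k _; rewrite expr2 mul0r.
  exact: Lap_contr.
rewrite big_ord_recl /= add0r.
rewrite (eq_bigr (fun i : 'I_m' => SB Y (inord i))); last by move=> i _; rewrite add0n.
rewrite [X in _ <= X]big_ord_recr /=.
rewrite (eq_bigr (fun i : 'I_m' => SB Y (widen_ord (leqnSn m') i))); last first.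
  move=> i _; congr (SB Y _); apply: val_inj; rewrite /= inordK //.
  by apply: ltnW; rewrite ltnS.
by rewrite lerDl SB_ge0.
Qed.

Lemma A_upper Y : SS (Aop Y) <= 4 * SS Y.
Proof.
rewrite !SS_blocks /SB.
apply: (@le_trans _ _ (\sum_i \sum_k (2 * Y (i, k) ^+ 2 + 2 * NB Y i k ^+ 2))).
  apply: ler_sum => i _; apply: ler_sum => k _; rewrite AopE.
  set a := Y (i, k); set b := NB Y i k.
  have := sqr_ge0 (a + b); nra.
rewrite (eq_bigr (fun i => 2 * \sum_k Y (i, k) ^+ 2 + 2 * \sum_k NB Y i k ^+ 2)); last first.
  by move=> i _; rewrite big_split /= -!mulr_sumr.
rewrite big_split /= -!mulr_sumr.
have := NB_sum Y; rewrite /SB => h; lra.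
Qed.

Definition TT X a := \sum_(j < a.+1) SB X (inord j).

Lemma TT_le X a : (a < m)%N -> TT X a <= SS X.
Proof.
move=> ha; rewrite /TT (big_ord_widen _ (fun j => SB X (inord j)) ha).
have H := @sub_sum_le R _ (fun j : 'I_m => (j < a.+1)%N) (fun j : 'I_m => SB X (inord j)) (fun i => SB_ge0 _ _).
apply: (le_trans H).
rewrite SS_blocks le_eqVlt; apply/orP; left; apply/eqP.
by apply: eq_bigr => i _; rewrite inord_val.
Qed.

Lemma TT_ge0 X a : 0 <= TT X a.
Proof. by apply: sumr_ge0 => j _; apply: SB_ge0. Qed.

Lemma inv_step Y a : forall (i : 'I_m), nat_of_ord i = a ->
  SB Y i <= a.+1%:R * TT (Aop Y) a.
Proof.
set X := Aop Y.
have YE : forall i k, Y (i, k) = X (i, k) + NB Y i k.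
  by move=> i k; rewrite /X AopE subrK.
elim: a => [|a IH] i Hi.
  rewrite mul1r /TT big_ord1 /=.
  have -> : (inord 0 : 'I_m) = i by apply: val_inj; rewrite /= inordK.
  rewrite le_eqVlt; apply/orP; left; apply/eqP; rewrite /SB; apply: eq_bigr => k _.
  by rewrite YE /NB Hi addr0.
have ha : (a < m)%N by rewrite -ltnS -Hi ltnS ltnW.
set j : 'I_m := inord a.
have hj : nat_of_ord j = a by rewrite /j inordK.
have IHj := IH j hj.
set p : R := a.+1%:R; set q : R := a.+2%:R.
have hq : q = p + 1 by rewrite /p /q -addn1 natrD.
have p0 : 0 < p by rewrite ltr0n.
set v := fun l => Y (j, l).
have hk : forall k, p * Y (i, k) ^+ 2 <= q * Lap v k ^+ 2 + p * q * X (i, k) ^+ 2.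
  move=> k; rewrite YE /NB Hi -/j -/v hq.
  set x := X (i, k); set b := Lap v k.
  rewrite -subr_ge0.
  have -> : (p + 1) * b ^+ 2 + p * (p + 1) * x ^+ 2 - p * (x + b) ^+ 2 = (b - p * x) ^+ 2 by ring.
  exact: sqr_ge0.
have h1 : p * SB Y i <= q * \sum_k Lap v k ^+ 2 + p * q * SB X i.
  rewrite /SB !mulr_sumr -big_split /=; apply: ler_sum => k _; exact: hk.
have h2 : \sum_k Lap v k ^+ 2 <= SB Y j by apply: Lap_contr.
have hT : TT X a.+1 = TT X a + SB X i.
  rewrite /TT big_ord_recr /=; congr (_ + SB X _); apply: val_inj.
  have hi : (a.+1 < m)%N by rewrite -Hi.
  by rewrite /= inordK ?Hi.
have h3 : q * \sum_k Lap v k ^+ 2 <= q * (p * TT X a).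
  by rewrite ler_wpM2l ?hq ?(le_trans h2 IHj) //; lra.
rewrite hT -/q -(ler_pM2l p0); nra.
Qed.

Lemma inv_bound Y : SS Y <= m%:R ^+ 2 * SS (Aop Y).
Proof.
rewrite [SS Y]SS_blocks.
apply: (@le_trans _ _ (\sum_(i : 'I_m) m%:R * SS (Aop Y))).
  apply: ler_sum => i _; apply: (le_trans (inv_step Y (nat_of_ord i) i (erefl _))).
  apply: ler_pM; rewrite ?ler0n ?TT_ge0 ?ler_nat ?TT_le //.
rewrite sumr_const card_ord -mulr_natr le_eqVlt; apply/orP; left; apply/eqP; ring.
Qed.


Local Notation Amx := (ftcs_block d n m r).

Lemma SSg_fv (x : 'cV[R]_N) : SSg x = SS (fv x).
Proof. exact: SSvE. Qed.

Lemma Aop_vec F : Aop (fv (vec F)) =1 Aop F.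
Proof. by move=> t; rewrite /Aop; apply: eq_bigr => u _; rewrite fv_vec. Qed.

Lemma SS_ext {F1 F2 : T -> R} : F1 =1 F2 -> SS F1 = SS F2.
Proof. by move=> h; rewrite /SS; apply: eq_bigr => t _; rewrite h. Qed.

Lemma SSA_vec F : SSg (Amx *m vec F) = SS (Aop F).
Proof. by rewrite SSg_fv; apply: SS_ext => t; rewrite mulE Aop_vec. Qed.

Lemma SS_vec F : SSg (vec F) = SS F.
Proof. by rewrite SSg_fv; apply: SS_ext => t; rewrite fv_vec. Qed.

Lemma A_bound x : SSg (Amx *m x) <= 2 ^+ 2 * SSg x.
Proof.
rewrite !SSg_fv (SS_ext (mulE x)).
by have := A_upper (fv x); rewrite (_ : 2 ^+ 2 = 4 :> R) //; rewrite expr2; lra.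
Qed.

Lemma SS_pos F t0 : F t0 = 1 -> 0 < SS F.
Proof.
move=> h; rewrite /SS (bigD1 t0) //= h expr1n.
apply: (lt_le_trans (ltr01 (R:=R))); rewrite lerDl.
by apply: sumr_ge0 => t _; rewrite sqr_ge0.
Qed.

Definition k0 : G := [ffun => Ordinal hn].

Lemma Amx_unit : Amx \in unitmx.
Proof.
rewrite -unitmx_tr -row_free_unit; apply: inj_row_free => v hv.
have h0 : Amx *m v^T = 0.
  by apply: trmx_inj; rewrite trmx_mul trmxK hv trmx0.
have hS : SS (fv v^T) <= 0.
  have := inv_bound (fv v^T).
  rewrite (_ : SS (Aop (fv v^T)) = 0) ?mulr0 //.
  rewrite -(SS_ext (mulE _)) h0 /SS big1 // => t _.
  by rewrite /fv mxE expr2 mul0r.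
have hz : forall t, fv v^T t = 0.
  move=> t; apply/eqP; rewrite -sqrf_eq0; apply/eqP.
  have Hs : SS (fv v^T) = 0 by apply/eqP; rewrite eq_le hS SS_ge0.
  move: Hs; rewrite /SS => /psumr_eq0P h; apply: h => // u _; exact: sqr_ge0.
apply: trmx_inj; rewrite trmx0; apply: fv_inj => t.
by rewrite hz /fv mxE.
Qed.

Lemma Ainv_bound x : SSg (invmx Amx *m x) <= m%:R ^+ 2 * SSg x.
Proof.
set y := invmx Amx *m x.
have hx : x = Amx *m y by rewrite /y mulKVmx // Amx_unit.
have -> : SSg x = SSg (Amx *m y) by rewrite -hx.
rewrite !SSg_fv (SS_ext (mulE y)); exact: inv_bound.
Qed.

Definition X0 (t : T) : R := (t.1 == ord_max)%:R.

Lemma AX0 : Aop X0 =1 X0.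
Proof.
move=> [i k]; rewrite AopE /NB.
case E: (nat_of_ord i) => [|i']; first by rewrite subr0.
have hi : (i' < m')%N by rewrite -ltnS -E.
rewrite (_ : (fun l => X0 (inord i', l)) = (fun _ => 0)).
  by rewrite Lap_const subr0.
apply: funext => l; rewrite /X0 /=.
rewrite (_ : ((inord i' : 'I_m) == ord_max) = false) //.
apply/negbTE; rewrite -val_eqE /= inordK; last by apply: ltnW; rewrite ltnS.
by rewrite neq_ltn hi.
Qed.

Definition X1 (t : T) : R := 1.
Definition Y1 (t : T) : R := (nat_of_ord t.1).+1%:R.

Lemma AY1 : Aop Y1 =1 X1.
Proof.
move=> [i k]; rewrite AopE /NB /Y1 /X1 /=.
case E: (nat_of_ord i) => [|i']; first by rewrite subr0.
have hi : (i' < m)%N by rewrite ltnW // -E.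
rewrite Lap_const inordK //.
by rewrite -addn1 natrD addrC addKr.
Qed.

Lemma cube_sum M : M%:R ^+ 3 <= 4 * \sum_(i < M) (i.+1)%:R ^+ 2 :> R.
Proof.
elim: M => [|M IH]; first by rewrite big_ord0 expr0n mulr0.
rewrite big_ord_recr /= -addn1 natrD.
set s := \sum_(i < M) _.
have IH' : M%:R ^+ 3 <= 4 * s := IH.
have h0 : 0 <= M%:R :> R by rewrite ler0n.
have key : (M%:R + 1) ^+ 3 <= M%:R ^+ 3 + 4 * (M%:R + 1) ^+ 2 :> R.
  rewrite -subr_ge0.
  have -> : M%:R ^+ 3 + 4 * (M%:R + 1) ^+ 2 - (M%:R + 1) ^+ 3 = M%:R ^+ 2 + 5 * M%:R + 3 :> R by ring.
  by rewrite !addr_ge0 ?sqr_ge0 ?mulr_ge0 //; lra.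
lra.
Qed.

Lemma main_sec : (1 / 2 <= opnorm Amx <= 2) /\
  (1 / 2 * m%:R <= opnorm (invmx Amx) <= 2 * m%:R).
Proof.
have pX1 : 0 < SSg (vec X1) by rewrite SS_vec; apply: (@SS_pos _ (ord0, k0)).
have pX0 : 0 < SSg (vec X0) by rewrite SS_vec; apply: (@SS_pos _ (ord_max, k0)); rewrite /X0 /= eqxx.
have m0 : 0 < m%:R :> R by rewrite ltr0n.
split; apply/andP; split.
- apply: (opnorm_ge _ 2 (1/2) (vec X0)) => //; [lra | exact: A_bound |].
  rewrite SSA_vec (SS_ext AX0) -SS_vec.
  have := SSg_ge0 (vec X0); lra.
- apply: (opnorm_le _ 2 (vec X1) _ pX1 A_bound); lra.
- apply: (opnorm_ge _ m%:R _ (vec X1)) => //; [lra | exact: Ainv_bound |].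
  have hA : Amx *m vec Y1 = vec X1.
    by apply: fv_inj => t; rewrite mulE Aop_vec AY1 fv_vec.
  have -> : invmx Amx *m vec X1 = vec Y1 by rewrite -hA mulKmx ?Amx_unit.
  rewrite !SS_vec !SS_blocks.
  set g := \sum_(k : G) (1 : R).
  have g0 : 0 <= g by apply: sumr_ge0 => k _; exact: ler01.
  rewrite (eq_bigr (fun i : 'I_m => g)); last first.
    by move=> i _; rewrite /SB; apply: eq_bigr => k _; rewrite /X1 expr1n.
  rewrite [X in _ <= X](eq_bigr (fun i : 'I_m => (nat_of_ord i).+1%:R ^+ 2 * g)); last first.
    by move=> i _; rewrite /SB /Y1 /= mulr_sumr; apply: eq_bigr => k _; rewrite mulr1.
  rewrite sumr_const card_ord -mulr_suml -mulr_natr.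
  have := cube_sum m; set s := \sum_(i < m) _ => hs.
  have : m%:R ^+ 3 * g <= 4 * s * g by rewrite ler_wpM2r.
  nra.
- apply: (le_trans (opnorm_le _ m%:R (vec X1) _ pX1 Ainv_bound)).
    by rewrite ltW.
  have := ltW m0; lra.
Qed.

End Ftcs.

Theorem mainTheorem3 :
  exists c C : Rdefinitions.R, 0 < c /\ c <= C /\
    forall (d n m : nat) (r : Rdefinitions.R),
      (1 <= d)%N -> (3 <= n)%N -> (1 <= m)%N ->
      0 < r -> r <= 1 / (2 * d%:R) ->
      (c <= opnorm (ftcs_block d n m r) <= C) /\
      (c * m%:R <= opnorm (invmx (ftcs_block d n m r)) <= C * m%:R).
Proof.
exists (1 / 2), 2; split; first by lra.
split; first by lra.
move=> d n [//|m'] r hd hn _ hr0 hr1.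
have hn0 : (0 < n)%N by apply: leq_trans hn.
exact: (@main_sec _ d n m' r hd hn0 hr0 hr1).
Qed.
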